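(* Assume $\gamma\neq\pm2$, $p_1,\dots,p_N>0$ and $q_1,\dots,q_N$ pairwise distinct. For each integer $m\ge1$ let $\tau_m(z)=\mathrm{tr}\big(\mathcal L(z)^m\big)$. Then there is a polynomial $P_m(X)$ of degree $m$ in one variable $X$, whose coefficients are functions of $(p,q)$ and which has no constant term, such that $\tau_m(z)=P_m(\Lambda(z))$ for all $z\neq-\gamma/2$. The coefficient of $X$ in $P_m$ is $$\mathfrak h^{(m)}=m\,\mathrm{tr}\Big(\big(T+\tfrac{\gamma}{2}A\big)\,(S+A)^{m-1}\Big).$$ Moreover $\tau_m(z)$ is a homogeneous symmetric function of $p_1,\dots,p_N$ of degree $m$.
   Context: Fix $N\ge2$, $\nu\neq0$ and a constant $\gamma$. The variables are $p_1,\dots,p_N$ and $q_1,\dots,q_N$. Write $q_{ij}=q_i-q_j$ and $\mathfrak s_{ij}=\mathrm{sgn}(q_i-q_j)$, with the convention $\mathfrak s_{ii}=0$. $E_{ij}$ denotes the elementary $N\times N$ matrix. Define the $N\times N$ matrices $A=\sum_{i,j}\sqrt{p_ip_j}\,\sinh\frac{\nu}{2}(q_i-q_j)\,E_{ij}$, $T=\sum_{i,j}\sqrt{p_ip_j}\,\cosh\frac{\nu}{2}(q_i-q_j)\,E_{ij}$ and $S=\sum_{i,j}\sqrt{p_ip_j}\,\mathfrak s_{ij}\sinh\frac{\nu}{2}(q_i-q_j)\,E_{ij}$. Let $\sigma(z)=z^\sigma=-\frac{\frac{\gamma}{2}z+1}{z+\frac{\gamma}{2}}$, $\Lambda(z)=\frac{z+z^\sigma}{2}=\frac{z^2-1}{2z+\gamma}$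 and $\xi(z)=\frac{z-z^\sigma}{2}=\frac{z^2+\gamma z+1}{2z+\gamma}$. The Lax matrix is $\mathcal L(z)=\Lambda(z)\,T+S+\xi(z)\,A$; equivalently $\mathcal L(z)=z\,T^h+z^\sigma (T^h)^t+S$ with $T^h=\frac12\sum_{i,j}\sqrt{p_ip_j}\,e^{\frac{\nu}{2}(q_i-q_j)}E_{ij}$. *)

(* Defs.v *)
From HB Require Import structures.
From mathcomp Require Import all_boot all_order all_algebra.
From mathcomp Require Import all_classical all_reals.
From mathcomp Require Import sequences exp.
Set Implicit Arguments. Unset Strict Implicit. Unset Printing Implicit Defensive.
Import Order.TTheory GRing.Theory Num.Theory.
Local Open Scope ring_scope.

Section Lax.
Variable R : realType.

Definition sinhR (x : R) : R := (expR x - expR (- x)) / 2.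
Definition coshR (x : R) : R := (expR x + expR (- x)) / 2.

Variables (N : nat) (nu gamma : R) (p q : 'I_N -> R).

Definition Amat : 'M[R]_N :=
  \matrix_(i, j) (Num.sqrt (p i * p j) * sinhR (nu / 2 * (q i - q j))).
Definition Tmat : 'M[R]_N :=
  \matrix_(i, j) (Num.sqrt (p i * p j) * coshR (nu / 2 * (q i - q j))).
Definition Smat : 'M[R]_N :=
  \matrix_(i, j) (Num.sqrt (p i * p j) * Num.sg (q i - q j)
                  * sinhR (nu / 2 * (q i - q j))).

Definition Lambda (z : R) : R := (z ^+ 2 - 1) / (2 * z + gamma).
Definition xi (z : R) : R := (z ^+ 2 + gamma * z + 1) / (2 * z + gamma).

Definition Lax (z : R) : 'M[R]_N :=
  Lambda z *: Tmat + Smat + xi z *: Amat.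

Definition tau (m : nat) (z : R) : R := \tr (Lax z ^+ m).

Definition hcoef (m : nat) : R :=
  m%:R * \tr ((Tmat + (gamma / 2) *: Amat) *m (Smat + Amat) ^+ m.-1).

End Lax.

(* Main.v *)
Require Import Defs.
From HB Require Import structures.
From mathcomp Require Import all_boot all_order all_algebra all_fingroup.
From mathcomp Require Import all_classical all_reals.
From mathcomp Require Import sequences exp.
From mathcomp Require Import ring lra.
Import Order.TTheory GRing.Theory Num.Theory.
Set Implicit Arguments. Unset Strict Implicit. Unset Printing Implicit Defensive.
Local Open Scope ring_scope.

Section Pairs.
Variable K : comPzRingType.
Variable n : nat.
Variables (U A : 'M[K]_n) (q : K).
Definition rstep (X : 'M[K]_n * 'M[K]_n) :=
  (X.1 *m U + q *: (X.2 *m A), X.1 *m A + X.2 *m U).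
Definition lstep (X : 'M[K]_n * 'M[K]_n) :=
  (U *m X.1 + q *: (A *m X.2), A *m X.1 + U *m X.2).
Fixpoint pp k := if k is k'.+1 then rstep (pp k') else (1%:M, 0).

Lemma rlstep X : rstep (lstep X) = lstep (rstep X).
Proof.
case: X => C D; rewrite /rstep /lstep /=; congr pair.
  rewrite !mulmxDl !mulmxDr -!scalemxAl -!scalemxAr !mulmxA !scalerDr.
  by rewrite -!addrA; congr (_ + _); rewrite addrC (addrC (q *: _)) -addrA.
rewrite !mulmxDl !mulmxDr -!scalemxAl -!scalemxAr !mulmxA.
by rewrite addrACA [in RHS]addrACA (addrC (U *m C *m A)).
Qed.

Lemma ppS_l k : pp k.+1 = lstep (pp k).
Proof.
elim: k => [|k IH].
  by rewrite /= /rstep /lstep /= !mul1mx !mulmx1 !mul0mx !mulmx0 !scaler0.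
have -> : pp k.+2 = rstep (pp k.+1) by []. by rewrite {1}IH rlstep.
Qed.

Lemma pp_sym : U^T = U -> A^T = - A ->
  forall k, (pp k).1^T = (pp k).1 /\ (pp k).2^T = - (pp k).2.
Proof.
move=> hU hA; elim=> [|k [IH1 IH2]].
  by rewrite /= trmx1 trmx0 oppr0.
split; rewrite [in LHS]/= [in RHS]ppS_l /rstep /lstep /=;
  rewrite !linearD ?linearZ /= !trmx_mul hU hA IH1 IH2;
  by rewrite ?mulmxN ?mulNmx ?opprK ?opprD.
Qed.

Lemma pp_sqrt y : y ^+ 2 = q ->
  forall k, (pp k).1 + y *: (pp k).2 = (U + y *: A) ^+ k.
Proof.
move=> hy; elim=> [|k IH]; first by rewrite /= scaler0 addr0 expr0.
rewrite exprSr -IH -mulmxE /= mulmxDl mulmxDr mulmxDr.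
rewrite -!scalemxAl -!scalemxAr scalerA -expr2 hy scalerDr.
by rewrite addrACA (addrC (q *: _)).
Qed.
End Pairs.

Lemma pp_map (K K' : comPzRingType) (f : {rmorphism K -> K'}) n
   (U A : 'M[K]_n) q k :
  pp (map_mx f U) (map_mx f A) (f q) k =
  (map_mx f (pp U A q k).1, map_mx f (pp U A q k).2).
Proof.
elim: k => [|k IH]; first by rewrite /= map_mx1 map_mx0.
by rewrite /= IH /rstep /= !map_mxD !map_mxM map_mxZ !map_mxM.
Qed.

Section CM.
Variable R : realType.
Variable n : nat.
Definition cm (l : nat) (M : 'M[{poly R}]_n) : 'M[R]_n := \matrix_(i, j) (M i j)`_l.
Local Notation mc B := (map_mx (@polyC R) B).

Lemma cmD l M1 M2 : cm l (M1 + M2) = cm l M1 + cm l M2.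
Proof. by apply/matrixP=> i j; rewrite !mxE coefD. Qed.
Lemma cm0 l : cm l 0 = 0.
Proof. by apply/matrixP=> i j; rewrite !mxE coef0. Qed.
Lemma cm1 l : cm l 1%:M = if l == 0%N then 1%:M else 0.
Proof.
apply/matrixP=> i j; rewrite !mxE; case: l => [|l] /=; rewrite ?mxE;
  by case: (i == j); rewrite ?coef1 ?coef0.
Qed.
Lemma cmMC l M B : cm l (M *m mc B) = cm l M *m B.
Proof.
apply/matrixP=> i j; rewrite !mxE coef_sum; apply: eq_bigr => k _.
by rewrite !mxE mulrC coefCM mulrC.
Qed.
Lemma cmXZ l M : cm l ('X *: M) = if l is l'.+1 then cm l' M else 0.
Proof. by apply/matrixP=> i j; case: l => [|l]; rewrite !mxE coefXM. Qed.
Lemma cmCZ l c M : cm l (c%:P *: M) = c *: cm l M.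
Proof. by apply/matrixP=> i j; rewrite !mxE coefCM. Qed.
Lemma cmZ0 Q M : cm 0 (Q *: M) = Q`_0 *: cm 0 M.
Proof. by apply/matrixP=> i j; rewrite !mxE coefM big_ord1. Qed.
Lemma cmZ1 Q M : cm 1 (Q *: M) = Q`_0 *: cm 1 M + Q`_1 *: cm 0 M.
Proof. by apply/matrixP=> i j; rewrite !mxE coefM big_ord_recl big_ord1. Qed.
Lemma cm_tr l (M : 'M[{poly R}]_n) : (\tr M)`_l = \tr (cm l M).
Proof. by rewrite /mxtrace coef_sum; apply: eq_bigr => i _; rewrite mxE. Qed.
Lemma cm_mulU l M B0 B1 :
  cm l (M *m (mc B0 + 'X *: mc B1)) =
  cm l M *m B0 + (if l is l'.+1 then cm l' M *m B1 else 0).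
Proof.
rewrite mulmxDr -scalemxAr cmD cmMC cmXZ; case: l => [|l] //.
by rewrite cmMC.
Qed.

Lemma comm_mxX (X B : 'M[R]_n) k : X *m B = B *m X -> X *m B ^+ k = B ^+ k *m X.
Proof.
move=> h; elim: k => [|k IH]; first by rewrite expr0 mulmx1 mul1mx.
by rewrite exprSr -mulmxE mulmxA IH -mulmxA h mulmxA.
Qed.

Lemma pow_cm0 B0 B1 k : cm 0 ((mc B0 + 'X *: mc B1) ^+ k) = B0 ^+ k.
Proof.
elim: k => [|k IH]; first by rewrite !expr0 cm1.
by rewrite !exprSr -!mulmxE cm_mulU IH addr0.
Qed.

Lemma pow_cm1 B0 B1 k X : X *m B0 = B0 *m X ->
  \tr (cm 1 ((mc B0 + 'X *: mc B1) ^+ k) *m X) = k%:R * \tr (B1 *m B0 ^+ k.-1 *m X).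
Proof.
elim: k X => [|k IH] X hX; first by rewrite expr0 cm1 /= mul0mx mul0r mxtrace0.
rewrite exprSr -mulmxE cm_mulU pow_cm0 mulmxDl mxtraceD -mulmxA IH; last first.
  by rewrite -mulmxA hX mulmxA.
have e2 : \tr (B0 ^+ k *m B1 *m X) = \tr (B1 *m B0 ^+ k *m X).
  by rewrite -mulmxA mxtrace_mulC -!mulmxA comm_mxX.
rewrite e2.
case: k {IH e2} => [|k]; first by rewrite mul0r add0r expr0 mul1r.
have e1 : B1 *m B0 ^+ k.+1.-1 *m (B0 *m X) = B1 *m B0 ^+ k.+2.-1 *m X.
  by rewrite /= [B0 ^+ k.+1]exprSr -mulmxE !mulmxA.
rewrite e1 /=.
by rewrite -[in RHS](addn1 k.+1) natrD mulrDl mul1r.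
Qed.

Variables (S T A : 'M[R]_n) (g : R).
Definition Qg : {poly R} := 'X * 'X + g%:P * 'X + 1.
Local Notation U := (mc S + 'X *: mc T).

Lemma cmQ l M : cm l (Qg *: M) =
  (if l is l'.+2 then cm l' M else 0) + g *: (if l is l'.+1 then cm l' M else 0)
  + cm l M.
Proof.
rewrite /Qg !scalerDl scale1r -!scalerA !cmD cmCZ !cmXZ.
by case: l => [|[|l]]; rewrite ?cmXZ ?scaler0.
Qed.

Lemma aux_TA (c d : 'M[R]_n) :
  c *m T + d *m A + (c *m A + d *m T) = (c + d) *m (T + A).
Proof.
rewrite mulmxDr !mulmxDl addrACA [in RHS]addrACA.
by congr (_ + _); rewrite addrC.
Qed.

Lemma pp_top k :
  (forall l, (k < l)%N -> cm l (pp U (mc A) Qg k).1 = 0) /\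
  (forall l, (k <= l)%N -> cm l (pp U (mc A) Qg k).2 = 0) /\
  cm k (pp U (mc A) Qg k).1 + cm k.-1 (pp U (mc A) Qg k).2 = (T + A) ^+ k.
Proof.
elim: k => [|k [IH1 [IH2 IH3]]].
  split; first by move=> [|l] //= _; rewrite cm1.
  by split; [move=> l _; rewrite /= cm0 | rewrite /= cm1 cm0 addr0 expr0].
rewrite [pp _ _ _ k.+1]/=.
set C := (pp U (mc A) Qg k).1; set D := (pp U (mc A) Qg k).2.
split.
  move=> [|[|l]] // hl; rewrite cmD cm_mulU cmQ !cmMC.
  by rewrite !IH1 ?IH2 ?(ltnW hl) // ?mul0mx ?scaler0 ?addr0 // ltnW // ltnW.
split.
  move=> [|l] // hl; rewrite cmD cm_mulU !cmMC.
  by rewrite !IH1 ?IH2 // ?mul0mx ?addr0 // ltnW.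
rewrite /= !cmD !cm_mulU cmQ !cmMC.
rewrite (IH1 k.+1) // (IH2 k.+1) // (IH2 k) // !mul0mx add0r scaler0 !addr0.
case: k IH1 IH2 IH3 @C @D => [|k] IH1 IH2 IH3 C D.
  by rewrite ?cmMC ?add0r ?addr0 /= cm1 /= !mul1mx expr1.
rewrite ?cmMC ?add0r ?addr0 exprSr -mulmxE -IH3.
by apply: aux_TA.
Qed.

Lemma pp_low (Q1 Q2 : {poly R}) : Q1`_0 = Q2`_0 -> Q1`_1 = Q2`_1 -> forall k,
  [/\ cm 0 (pp U (mc A) Q1 k).1 = cm 0 (pp U (mc A) Q2 k).1,
      cm 1 (pp U (mc A) Q1 k).1 = cm 1 (pp U (mc A) Q2 k).1,
      cm 0 (pp U (mc A) Q1 k).2 = cm 0 (pp U (mc A) Q2 k).2 &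
      cm 1 (pp U (mc A) Q1 k).2 = cm 1 (pp U (mc A) Q2 k).2].
Proof.
move=> h0 h1; elim=> [|k [e1 e2 e3 e4]] //=.
by rewrite !cmD !cm_mulU cmZ0 cmZ1 cmZ0 cmZ1 !cmMC e1 e2 e3 e4 h0 h1.
Qed.
End CM.

Section Real.
Variable R : realType.

Lemma coshRN (x : R) : coshR (- x) = coshR x.
Proof. by rewrite /coshR opprK addrC. Qed.
Lemma sinhRN (x : R) : sinhR (- x) = - sinhR x.
Proof. by rewrite /sinhR opprK -mulNr opprB. Qed.
Lemma sinhR0 : sinhR (0 : R) = 0.
Proof. by rewrite /sinhR oppr0 subrr mul0r. Qed.
Lemma cosh_sinh (x : R) : coshR x + sinhR x = expR x.
Proof. rewrite /coshR /sinhR; lra. Qed.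

Variables (N : nat) (nu : R) (p q : 'I_N -> R).
Local Notation T := (Tmat nu p q).
Local Notation S := (Smat nu p q).
Local Notation A := (Amat nu p q).

Lemma argN i j : nu / 2 * (q j - q i) = - (nu / 2 * (q i - q j)).
Proof. by rewrite -mulrN opprB. Qed.

Lemma Tsym : T^T = T.
Proof. by apply/matrixP=> i j; rewrite !mxE argN coshRN (mulrC (p j)). Qed.
Lemma Ssym : S^T = S.
Proof.
apply/matrixP=> i j; rewrite !mxE argN sinhRN -(opprB (q i)) sgrN.
by rewrite (mulrC (p j)) !mulrN !mulNr opprK.
Qed.
Lemma Aanti : A^T = - A.
Proof. by apply/matrixP=> i j; rewrite !mxE argN sinhRN mulrN (mulrC (p j)). Qed.

Lemma SA_zero i j : ~~ (q j < q i) -> (S + A) i j = 0.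
Proof.
rewrite -leNgt !mxE le_eqVlt => /orP[/eqP->|h].
  by rewrite subrr mulr0 sinhR0 !mulr0 addr0.
by rewrite ltr0_sg ?subr_lt0 // mulrN1 mulNr addNr.
Qed.

Definition fq i := #|[pred l | q l < q i]|.
Lemma fq_lt j l : q j < q l -> (fq j < fq l)%N.
Proof.
move=> h; have hP : [pred x | q x < q j] \proper [pred x | q x < q l].
  apply/properP; split.
    by apply/fintype.subsetP=> x; rewrite !inE => hx; apply: lt_trans hx h.
  by exists j; rewrite !inE // ltxx.
exact: proper_card hP.
Qed.

Lemma SA_pow k i j : ((S + A) ^+ k) i j != 0 -> (fq j + k <= fq i)%N.
Proof.
elim: k i j => [|k IH] i j.
  by rewrite expr0 mxE; case: (eqVneq i j) => [->|] //; rewrite ?addn0 ?eqxx.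
apply: contraR => hn; rewrite exprSr -mulmxE mxE big1 // => l _.
have [->|/IH hl] := eqVneq (((S + A) ^+ k) i l) 0; first by rewrite mul0r.
case: (ltP (q j) (q l)) => h; last by rewrite SA_zero ?mulr0 // -leNgt.
have := fq_lt h => hjl; exfalso; move/negP: hn; apply.
by rewrite addnS; apply: leq_trans hl; rewrite ltn_add2r.
Qed.

Lemma tr_SA m : (1 <= m)%N -> \tr ((S + A) ^+ m) = 0.
Proof.
move=> hm; rewrite /mxtrace big1 // => i _.
apply/eqP; apply: contraT => /SA_pow; rewrite -{2}(addn0 (fq i)) leq_add2l.
by rewrite leqNgt hm.
Qed.

Hypothesis ppos : forall i, 0 < p i.

Lemma TA_rank1 m : (1 <= m)%N -> \tr ((T + A) ^+ m) = (\sum_i p i) ^+ m.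
Proof.
pose u : 'cV[R]_N := \col_i (Num.sqrt (p i) * expR (nu / 2 * q i)).
pose v : 'rV[R]_N := \row_j (Num.sqrt (p j) * expR (- (nu / 2 * q j))).
have huv : T + A = u *m v.
  apply/matrixP=> i j; rewrite !mxE big_ord1 !mxE -mulrDr cosh_sinh.
  rewrite sqrtrM ?(ltW (ppos i)) // mulrBr expRD; lra.
have hvu : v *m u = (\sum_i p i)%:M.
  apply/matrixP=> i j; rewrite !ord1 !mxE /= mulr1n; apply: eq_bigr => l _.
  rewrite !mxE mulrACA -expr2 sqr_sqrtr ?(ltW (ppos l)) // -expRD addNr expR0.
  by rewrite mulr1.
case: m => // m _.
have -> : (T + A) ^+ m.+1 = (\sum_i p i) ^+ m *: (u *m v).
  elim: m => [|m IH]; first by rewrite expr1 expr0 scale1r.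
  rewrite exprSr IH huv -mulmxE -scalemxAl -mulmxA (mulmxA v) hvu.
  by rewrite mul_scalar_mx -scalemxAr scalerA -exprSr.
rewrite mxtraceZ mxtrace_mulC hvu /mxtrace big_ord1 mxE mulr1n.
by rewrite -exprSr.
Qed.

End Real.

Section Main.
Variables (R : realType) (N : nat) (nu gamma : R) (p q : 'I_N -> R).
Local Notation mc B := (map_mx (@polyC R) B).
Local Notation T := (Tmat nu p q).
Local Notation S := (Smat nu p q).
Local Notation A := (Amat nu p q).
Local Notation U := (mc S + 'X *: mc T).

Lemma trD0 (Q : {poly R}) k : \tr (pp U (mc A) Q k).2 = 0.
Proof.
have hU : U^T = U by rewrite linearD linearZ /= !map_trmx Tsym Ssym.
have hA : (mc A)^T = - mc A by rewrite map_trmx Aanti map_mxN.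
have [_ h2] := pp_sym Q hU hA k.
have e : \tr (pp U (mc A) Q k).2 = - \tr (pp U (mc A) Q k).2.
  by rewrite -{1}mxtrace_tr h2 raddfN.
apply/polyP=> i; have := congr1 (fun t : {poly R} => t`_i) e; rewrite /= coefN coef0; lra.
Qed.

Lemma eval_tau m z : z != - (gamma / 2) ->
  tau nu gamma p q m z = (\tr (pp U (mc A) (Qg gamma) m).1).[Lambda gamma z].
Proof.
move=> hz; set L := Lambda gamma z; set xz := xi gamma z.
have h2 : 2 * z + gamma != 0.
  apply: contra hz => /eqP h; apply/eqP; lra.
have hfU : map_mx (horner_eval L) U = S + L *: T.
  by apply/matrixP=> i j; rewrite !mxE horner_evalE !hornerE mulrC.
have hfA : map_mx (horner_eval L) (mc A) = A.
  by apply/matrixP=> i j; rewrite !mxE horner_evalE !hornerE.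
have hfQ : horner_eval L (Qg gamma) = xz ^+ 2.
  rewrite horner_evalE /Qg hornerD hornerD hornerM hornerX hornerCM hornerX hornerC.
  rewrite /L /xz /Lambda /xi; field; exact: h2.
have := pp_map (horner_eval L) U (mc A) (Qg gamma) m.
rewrite hfU hfA => hmap. set w := (X in pp _ _ X) in hmap. have ew : w = xz ^+ 2 by exact: hfQ.
rewrite ew in hmap.
have := @pp_sqrt _ _ (S + L *: T) A (xz ^+ 2) xz (erefl _) m.
rewrite hmap /= => hs.
rewrite /tau /Lax -/L -/xz (addrC (L *: T)) -hs mxtraceD mxtraceZ !trace_map_mx.
by rewrite trD0 rmorph0 mulr0 addr0.
Qed.


Lemma coef_P m l : (\tr (pp U (mc A) (Qg gamma) m).1)`_l = \tr (cm l (pp U (mc A) (Qg gamma) m).1).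
Proof. exact: cm_tr. Qed.

Hypothesis hp : forall i, 0 < p i.
Hypothesis hN : (2 <= N)%N.

Lemma sum_p_gt0 : 0 < \sum_i p i.
Proof.
have i0 : 'I_N := Ordinal (leq_trans (isT : (0 < 2)%N) hN).
apply: (lt_le_trans (hp i0)); rewrite (bigD1 i0) //= lerDl.
by apply: sumr_ge0 => j _; exact: ltW.
Qed.

Lemma size_P m : (1 <= m)%N -> size (\tr (pp U (mc A) (Qg gamma) m).1) = m.+1.
Proof.
move=> hm; have [top1 [top2 top3]] := pp_top S T A gamma m.
apply/eqP; rewrite eqn_leq; apply/andP; split.
  by apply/leq_sizeP => l hl; rewrite coef_P top1 ?mxtrace0.
rewrite ltnNge; apply/negP => /leq_sizeP /(_ m (leqnn m)); rewrite coef_P.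
have -> : cm m (pp U (mc A) (Qg gamma) m).1 =
   (T + A) ^+ m - cm m.-1 (pp U (mc A) (Qg gamma) m).2.
  by rewrite -top3 addrK.
rewrite mxtraceD raddfN /= -cm_tr trD0 coef0 subr0 TA_rank1 //.
by apply/eqP; rewrite expf_neq0 // gt_eqF // sum_p_gt0.
Qed.


Definition Yp : {poly R} := 1 + (gamma / 2)%:P * 'X.

Lemma Q_low : (Qg gamma)`_0 = (Yp ^+ 2)`_0 /\ (Qg gamma)`_1 = (Yp ^+ 2)`_1.
Proof.
rewrite /Qg /Yp expr2 !coefD !coefXM /= !coefCM !coefX !coef1 /=.
rewrite !coefM !big_ord_recl !big_ord0 /=.
rewrite !coefD !coefCM !coefX !coef1 /=.
split; lra.
Qed.

Lemma hM : U + Yp *: mc A = mc (S + A) + 'X *: mc (T + (gamma / 2) *: A).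
Proof.
apply/matrixP=> i j; rewrite !mxE /Yp !polyCD !polyCM; ring.
Qed.

Lemma trC2 m : \tr (pp U (mc A) (Yp ^+ 2) m).1 = \tr ((U + Yp *: mc A) ^+ m).
Proof.
have := @pp_sqrt _ _ U (mc A) (Yp ^+ 2) Yp (erefl _) m.
by move=> <-; rewrite mxtraceD mxtraceZ trD0 mulr0 addr0.
Qed.

Lemma coef0_P m : (1 <= m)%N -> (\tr (pp U (mc A) (Qg gamma) m).1)`_0 = 0.
Proof.
move=> hm; have [h0 h1] := Q_low.
have [e1 e2 _ _] := pp_low S T A h0 h1 m.
by rewrite coef_P e1 -cm_tr trC2 hM cm_tr pow_cm0 tr_SA.
Qed.

Lemma coef1_P m : (1 <= m)%N ->
  (\tr (pp U (mc A) (Qg gamma) m).1)`_1 = hcoef nu gamma p q m.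
Proof.
move=> hm; have [h0 h1] := Q_low.
have [e1 e2 _ _] := pp_low S T A h0 h1 m.
rewrite coef_P e2 -cm_tr trC2 hM cm_tr -[cm 1 _]mulmx1 pow_cm1 ?mulmx1 ?mul1mx //.
Qed.

End Main.

Section Extra.
Variables (R : realType) (N : nat) (nu gamma : R) (p q : 'I_N -> R).

Lemma sqrt_scale (t a b : R) : 0 < t ->
  Num.sqrt ((t * a) * (t * b)) = t * Num.sqrt (a * b).
Proof.
move=> ht; rewrite mulrACA -expr2 sqrtrM ?sqr_ge0 // sqrtr_sqr gtr0_norm //.
Qed.

Lemma Lax_scale (t z : R) : 0 < t ->
  Lax nu gamma (fun i => t * p i) q z = t *: Lax nu gamma p q z.
Proof.
move=> ht.
have hT : Tmat nu (fun i => t * p i) q = t *: Tmat nu p q.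
  by apply/matrixP=> i j; rewrite !mxE sqrt_scale // [RHS]mulrA.
have hS : Smat nu (fun i => t * p i) q = t *: Smat nu p q.
  apply/matrixP=> i j; rewrite !mxE sqrt_scale // !mulrA. reflexivity.
have hA : Amat nu (fun i => t * p i) q = t *: Amat nu p q.
  by apply/matrixP=> i j; rewrite !mxE sqrt_scale // [RHS]mulrA.
rewrite /Lax hT hS hA !scalerDr !scalerA.
by rewrite (mulrC t (Lambda _ _)) (mulrC t (xi _ _)).
Qed.

Lemma exprZ_mx (t : R) (M : 'M[R]_N) k : (t *: M) ^+ k = t ^+ k *: M ^+ k.
Proof.
elim: k => [|k IH]; first by rewrite !expr0 scale1r.
by rewrite exprSr IH -mulmxE -scalemxAl -scalemxAr scalerA mulmxE -!exprSr.
Qed.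

Lemma tr_perm (M : 'M[R]_N) (s : {perm 'I_N}) k :
  \tr ((\matrix_(i, j) M (s i) (s j)) ^+ k) = \tr (M ^+ k).
Proof.
have -> : (\matrix_(i, j) M (s i) (s j)) ^+ k = \matrix_(i, j) (M ^+ k) (s i) (s j).
  elim: k => [|k IH].
    by apply/matrixP=> i j; rewrite !expr0 !mxE (inj_eq perm_inj).
  apply/matrixP=> i j; rewrite !exprSr -!mulmxE IH !mxE.
  rewrite [in RHS](reindex_inj (@perm_inj _ s)) /=.
  by apply: eq_bigr => l _; rewrite !mxE.
rewrite /mxtrace [in RHS](reindex_inj (@perm_inj _ s)) /=.
by apply: eq_bigr => l _; rewrite !mxE.
Qed.

Lemma Lax_perm (s : {perm 'I_N}) z :
  Lax nu gamma (fun i => p (s i)) (fun i => q (s i)) z =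
  \matrix_(i, j) Lax nu gamma p q z (s i) (s j).
Proof. by apply/matrixP=> i j; rewrite !mxE. Qed.
End Extra.

Unset Implicit Arguments.

Theorem mainTheorem1 (R : realType) (N : nat) (nu gamma : R)
    (p q : 'I_N -> R) (m : nat) :
  (2 <= N)%N -> nu != 0 -> gamma != 2 -> gamma != -2 ->
  (forall i, 0 < p i) -> injective q -> (1 <= m)%N ->
  [/\ exists P : {poly R},
        [/\ size P = m.+1, P`_0 = 0, P`_1 = hcoef nu gamma p q m &
            forall z : R, z != - (gamma / 2) ->
              tau nu gamma p q m z = P.[Lambda gamma z]],
      (forall (t : R) (z : R), 0 < t -> z != - (gamma / 2) ->
         tau nu gamma (fun i => t * p i) q m z
         = t ^+ m * tau nu gamma p q m z) &
      (forall (s : {perm 'I_N}) (z : R), z != - (gamma / 2) ->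
         tau nu gamma (fun i => p (s i)) (fun i => q (s i)) m z
         = tau nu gamma p q m z)].
Proof.
move=> hN _ _ _ hp _ hm; split.
- exists (\tr (pp (map_mx (@polyC R) (Smat nu p q) + 'X *: map_mx (@polyC R) (Tmat nu p q))
     (map_mx (@polyC R) (Amat nu p q)) (Qg gamma) m).1); split.
  + exact: size_P.
  + exact: coef0_P.
  + exact: coef1_P.
  + by move=> z hz; apply: eval_tau.
- by move=> t z ht _; rewrite /tau Lax_scale // exprZ_mx mxtraceZ.
- by move=> s z _; rewrite /tau Lax_perm tr_perm.
Qed.
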